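(* Let $a$ and $b$ be relatively prime integers with $1<a<b$, let $(u,v)$ be the definitely least solution of $ax+by=1$, and let $S=\langle a,b\rangle$. Then $\#T(S)=|uv|$.
   Context: $\langle a,b\rangle=\{\lambda_1a+\lambda_2b:\lambda_1,\lambda_2\in\mathbb{N}\}$ with $\mathbb{N}$ the nonnegative integers. $F(S)$ is the largest integer not in $S$; $N(S)=\{s\in S:s<F(S)\}$ and $T(S)=\{s\in N(S): s-1\notin S\text{ and }s+1\notin S\}$. The definitely least solution $(u,v)$ of $ax+by=1$ is the unique integer solution with both $|u|$ and $|v|$ minimal; equivalently the solution with $|u|\le b/2$, $|v|\le a/2$. *)

(* Defs.v *)
From mathcomp Require Import all_boot all_order all_algebra.
Set Implicit Arguments. Unset Strict Implicit. Unset Printing Implicit Defensive.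
Import Order.TTheory GRing.Theory Num.Theory.
Local Open Scope ring_scope.

(* Negative integers are never in S; for x = n >= 0 we search l1, l2 in
   [0, n], which is exhaustive whenever a, b >= 1 (as in the theorem). *)
Definition inS (a b : nat) (x : int) : bool :=
  match x with
  | Posz n => has (fun i => has (fun j => (i * a + j * b == n)%N) (iota 0 n.+1)) (iota 0 n.+1)
  | Negz _ => false
  end.

Definition is_frobenius (a b : nat) (F : int) : Prop :=
  ~~ inS a b F /\ (forall x : int, F < x -> inS a b x).

(* N(S) = { s in S : s < F(S) }, listed increasingly (S contains only
   nonnegative integers, so s ranges over 0 .. |F|-1). *)
Definition NS (a b : nat) (F : int) : seq int :=
  [seq s <- [seq i%:Z | i <- iota 0 `|F|%N] | (s < F) && inS a b s].

Definition TS (a b : nat) (F : int) : seq int :=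
  [seq s <- NS a b F | ~~ inS a b (s - 1) && ~~ inS a b (s + 1)].

Definition definitely_least (a b : nat) (u v : int) : Prop :=
  a%:Z * u + b%:Z * v = 1 /\
  (forall x y : int, a%:Z * x + b%:Z * y = 1 -> `|u| <= `|x| /\ `|v| <= `|y|).

(* Main.v *)
Require Import Defs.
From mathcomp Require Import all_boot all_order all_algebra.
From mathcomp Require Import zify ring.
Import Order.TTheory GRing.Theory Num.Theory.
Local Open Scope ring_scope.

Lemma inSP (a b n : nat) : (0 < a)%N -> (0 < b)%N ->
  reflect (exists i j, (i*a+j*b = n)%N) (inS a b (Posz n)).
Proof.
move=> a0 b0; rewrite /inS; apply: (iffP hasP).
  by move=> [i _ /hasP [j _ /eqP e]]; exists i, j.
move=> [i [j e]]; exists i; first by rewrite mem_iota; nia.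
apply/hasP; exists j; first by rewrite mem_iota; nia.
by rewrite e.
Qed.

Lemma inS_neg a b (z : int) : z < 0 -> inS a b z = false.
Proof. by case: z. Qed.

Lemma uniqY (a b : nat) (X Y X' Y' : int) : coprime a b -> (0 < a)%N ->
  0 <= Y < a%:Z -> 0 <= Y' < a%:Z -> X * a%:Z + Y * b%:Z = X' * a%:Z + Y' * b%:Z ->
  Y = Y' /\ X = X'.
Proof.
move=> cab a0 /andP[Y0 Ya] /andP[Y'0 Y'a] e.
have d : (a%:Z %| (Y - Y') * b%:Z)%Z.
  apply/dvdzP; exists (X' - X); rewrite mulrBl mulrBl; lia.
rewrite Gauss_dvdzl in d; last by rewrite coprimezE.
case/dvdzP: d => k hk.
have k0 : k = 0 by nia.
move: hk; rewrite k0 mul0r => /eqP; rewrite subr_eq0 => /eqP hY.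
split => //; subst; nia.
Qed.

Lemma memS (a b : nat) (X Y : int) : coprime a b -> (0 < a)%N -> (0 < b)%N ->
  0 <= Y < a%:Z -> inS a b (X * a%:Z + Y * b%:Z) = (0 <= X).
Proof.
move=> cab a0 b0 hY; apply/idP/idP.
  case: (ltrP (X * a%:Z + Y * b%:Z) 0) => [/inS_neg -> //|].
  move=> h; have [n hn] : exists n : nat, X * a%:Z + Y * b%:Z = n%:Z.
    by exists (absz (X * a%:Z + Y * b%:Z)); lia.
  rewrite hn => /inSP [//|//|i [j e]].
  have ej : j = (j %/ a * a + j %% a)%N by rewrite -divn_eq.
  have hr : (j %% a < a)%N by rewrite ltn_mod.
  have := @uniqY a b X Y ((i + j %/ a * b)%N%:Z) ((j %% a)%N%:Z) cab a0 hY.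
  case.
  - apply/andP; split; lia.
  - rewrite hn -e; move: ej; set q := (j %/ a)%N; set r := (j %% a)%N => ej.
    rewrite ej !PoszD !PoszM !PoszD !PoszM; ring.
  - by move=> _ ->.
move=> hX; have [x hx] : exists x : nat, X = x%:Z by exists (absz (X)); lia.
case/andP: hY => Y0 _.
have [y hy] : exists y : nat, Y = y%:Z by exists (absz (Y)); lia.
subst; rewrite -!PoszM -PoszD; apply/inSP => //; by exists x, y.
Qed.

Lemma charT (a b : nat) (u v : int) (n : nat) : coprime a b -> (1 < a)%N -> (1 < b)%N ->
  a%:Z * u + b%:Z * v = 1 -> 0 < u -> v < 0 -> 2 * u <= b%:Z -> - 2 * v <= a%:Z ->
  (inS a b (Posz n) && ~~ inS a b (n%:Z - 1) && ~~ inS a b (n%:Z + 1)) <->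
  (exists x y : nat, x%:Z < u /\ y%:Z < - v /\ n = (x * a + y * b)%N).
Proof.
move=> cab a1 b1 huv u0 v0 hu hv.
have a0 : (0 < a)%N by lia.
have b0 : (0 < b)%N by lia.
split.
  case/andP=> /andP [/inSP [//|//|i [j e]] h1] h2.
  have ej : j = (j %/ a * a + j %% a)%N by rewrite -divn_eq.
  have hr : (j %% a < a)%N by rewrite ltn_mod.
  move: ej hr; set q := (j %/ a)%N; set r := (j %% a)%N => ej hr.
  have hn : n%:Z = (i + q * b)%N%:Z * a%:Z + r%:Z * b%:Z.
    by rewrite -e ej !PoszD !PoszM !PoszD !PoszM; ring.
  have hrv : r%:Z + v < 0.
    rewrite ltNge; apply/negP => hrv.
    have e1 : n%:Z + 1 = ((i + q * b)%N%:Z + u) * a%:Z + (r%:Z + v) * b%:Z.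
      by rewrite hn -huv; ring.
    move: h2; rewrite e1 memS //; first lia.
    apply/andP; split; lia.
  have e1 : n%:Z - 1 = ((i + q * b)%N%:Z - u) * a%:Z + (r%:Z - v) * b%:Z.
    by rewrite hn -huv; ring.
  move: h1; rewrite e1 memS //; last by apply/andP; split; lia.
  move=> hX; exists (i + q * b)%N, r; split; first lia.
  split; first lia.
  by rewrite -e ej; ring.
move=> [x [y [hx [hy ->]]]].
have hn : (x * a + y * b)%N%:Z = x%:Z * a%:Z + y%:Z * b%:Z.
  by rewrite !PoszD !PoszM.
rewrite hn.
have e1 : x%:Z * a%:Z + y%:Z * b%:Z + 1 = (x%:Z + u - b%:Z) * a%:Z + (y%:Z + v + a%:Z) * b%:Z.
  by rewrite -huv; ring.
have e2 : x%:Z * a%:Z + y%:Z * b%:Z - 1 = (x%:Z - u) * a%:Z + (y%:Z - v) * b%:Z.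
  by rewrite -huv; ring.
rewrite e1 e2 !memS //; last 3 first.
- apply/andP; split; lia.
- apply/andP; split; lia.
- apply/andP; split; lia.
apply/andP; split; first (apply/andP; split); lia.
Qed.

Lemma mainT (a b : nat) (u v F : int) : coprime a b -> (1 < a)%N -> (1 < b)%N ->
  a%:Z * u + b%:Z * v = 1 -> 0 < u -> v < 0 -> 2 * u <= b%:Z -> - 2 * v <= a%:Z ->
  (forall x : int, F < x -> inS a b x) ->
  size (TS a b F) = (absz u * absz v)%N.
Proof.
move=> cab a1 b1 huv u0 v0 hu hv hF.
have a0 : (0 < a)%N by lia.
set L := [seq Posz (x * a + y * b) | x <- iota 0 (absz u), y <- iota 0 (absz v)].
have <- : size L = (absz u * absz v)%N by rewrite size_allpairs !size_iota.
apply: perm_size; apply: uniq_perm.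
- rewrite /TS /NS; do 2 apply: filter_uniq.
  by rewrite map_inj_uniq ?iota_uniq // => x y [].
- rewrite allpairs_uniq ?iota_uniq //.
  move=> [x y] [x' y'] /allpairsP [[x1 y1] [/= hx1 hy1 [-> ->]]].
  move=> /allpairsP [[x2 y2] [/= hx2 hy2 [-> ->]]].
  move: hx1 hy1 hx2 hy2; rewrite !mem_iota /= => hx1 hy1 hx2 hy2 [e].
  have := @uniqY a b x1%:Z y1%:Z x2%:Z y2%:Z cab a0.
  case.
  + apply/andP; split; lia.
  + apply/andP; split; lia.
  + by move: e; rewrite -!PoszM -!PoszD => ->.
  + by move=> [->] [->].
move=> s; rewrite /TS /NS !mem_filter.
apply/idP/idP.
  case/andP=> h12 /andP [/andP [hsF hs] /mapP [n _ hn]]; subst s.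
  have : (exists x y : nat, x%:Z < u /\ y%:Z < - v /\ n = (x * a + y * b)%N).
    apply: (proj1 (@charT a b u v n cab a1 b1 huv u0 v0 hu hv)).
    by rewrite hs.
  move=> [x [y [hx [hy ->]]]].
  apply/allpairsP; exists (x, y); rewrite !mem_iota /=; split => //; lia.
case/allpairsP => [[x y] [/= + + ->]]; rewrite !mem_iota => hx hy.
have /andP [/andP [h0 h1] h2] := (@charT a b u v (x * a + y * b)%N cab a1 b1 huv u0 v0 hu hv).2
  (ex_intro _ x (ex_intro _ y (conj (ltac:(lia) : x%:Z < u) (conj (ltac:(lia) : y%:Z < - v) erefl)))).
have hlt : (x * a + y * b)%N%:Z < F.
  rewrite ltNge; apply/negP => hle.
  by move: h2; rewrite hF //; lia.
rewrite h1 h2 h0 hlt /=.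
apply/mapP; exists (x * a + y * b)%N => //.
rewrite mem_iota; lia.
Qed.

Lemma inS_sym (a b : nat) (z : int) : (0 < a)%N -> (0 < b)%N -> inS a b z = inS b a z.
Proof.
move=> a0 b0; case: z => [n|n] //.
apply/idP/idP => /inSP [//|//|i [j e]]; apply/inSP => //; exists j, i; lia.
Qed.

Lemma TS_sym (a b : nat) (F : int) : (0 < a)%N -> (0 < b)%N -> TS a b F = TS b a F.
Proof.
move=> a0 b0; rewrite /TS /NS.
have -> : [seq s <- [seq i%:Z | i <- iota 0 `|F|] | (s < F) && inS a b s] =
          [seq s <- [seq i%:Z | i <- iota 0 `|F|] | (s < F) && inS b a s].
  by apply: eq_filter => s; rewrite inS_sym.
by apply: eq_filter => s; rewrite !(@inS_sym a b _ a0 b0).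
Qed.

Theorem lemma3p3 (a b : nat) (u v : int) (F : int) :
  coprime a b -> (1 < a)%N -> (a < b)%N ->
  definitely_least a b u v ->
  is_frobenius a b F ->
  size (TS a b F) = absz (u * v).
Proof.
move=> cab a1 ab [huv hmin] [_ hF].
have b1 : (1 < b)%N by lia.
have a0 : (0 < a)%N by lia.
have b0 : (0 < b)%N by lia.
have [h1 h2] := hmin (u - b%:Z) (v + a%:Z) ltac:(rewrite -huv; ring).
have [h3 h4] := hmin (u + b%:Z) (v - a%:Z) ltac:(rewrite -huv; ring).
rewrite abszM.
have u0 : u != 0.
  apply/negP => /eqP u0; move: huv; rewrite u0 mulr0 add0r => e; case: (ltrP 0 v) => hv0; nia.
case: (ltrP 0 u) => hu.
  have hv : v < 0 by nia.
  apply: mainT => //; lia.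
have hu' : u < 0 by lia.
have hv : 0 < v by nia.
rewrite TS_sym // mulnC.
apply: mainT => //.
- by rewrite coprime_sym.
- rewrite -huv; ring.
- lia.
- lia.
- by move=> x hx; rewrite -(@inS_sym a b) //; apply: hF.
Qed.
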